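(* For every pair of integers $r$ and $k$ with $r\ge 2$, $k$ positive, $r+k\equiv 0\pmod 2$ and $k\le r$, there exist infinitely many triples $(G,P,d)$ such that (1) $G$ is a graph with $\chi(G)\le r$, (2) $P\subset V(G)$ and $|\mathcal{D}_G(P,2)|=2(r+k-1)$, (3) $d\colon P\to[r+k]$ is a precoloring of $P$ in $G$, and (4) $d$ cannot be extended to a $\frac{3r+k}{2}$-coloring of $G$.
   Context: For a graph $G$, $P\subset V(G)$ and a positive integer $k$, $\mathcal{D}_G(P,k)=\{\{x,y\}\subset P: x\ne y,\ d_G(x,y)\le k\}$, where $d_G$ is the distance in $G$. $[m]=\{1,\dots,m\}$. A precoloring of $P$ in $G$ is a proper coloring of $G[P]$; an $m$-coloring of $G$ is a proper coloring using at most $m$ colors; $d$ is extended by a coloring $f$ of $G$ if $f(v)=d(v)$ for all $v\in P$. *)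

(* Defs.v *)
From mathcomp Require Import all_boot.
Set Implicit Arguments. Unset Strict Implicit. Unset Printing Implicit Defensive.

Definition simple_graph (T : finType) (e : rel T) : Prop :=
  symmetric e /\ irreflexive e.

Definition dist_le (T : finType) (e : rel T) (x y : T) (k : nat) : bool :=
  [exists j : 'I_k.+1, exists s : j.-tuple T, path e x s && (last x s == y)].

Definition DG (T : finType) (e : rel T) (P : {set T}) (k : nat) : {set {set T}} :=
  [set S : {set T} | [exists x, exists y,
     [&& x \in P, y \in P, x != y, S == [set x; y] &
         dist_le e x y k]]].

Definition m_coloring (T : finType) (e : rel T) (m : nat) (f : T -> nat) : Prop :=
  (forall v, 1 <= f v <= m) /\ (forall x y, e x y -> f x != f y).

Definition chi_le (T : finType) (e : rel T) (r : nat) : Prop :=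
  exists f : T -> nat, m_coloring e r f.

(* d is a precoloring of P in G with colors in [m]: a proper coloring of G[P]
   with values in [m] (values of d outside P are irrelevant). *)
Definition precoloring (T : finType) (e : rel T) (P : {set T}) (m : nat)
  (d : T -> nat) : Prop :=
  (forall v, v \in P -> 1 <= d v <= m) /\
  (forall x y, x \in P -> y \in P -> e x y -> d x != d y).

Definition extends (T : finType) (P : {set T}) (d f : T -> nat) : Prop :=
  forall v, v \in P -> f v = d v.

(* Main.v *)
Require Import Defs.
From mathcomp Require Import all_boot zify.
Set Implicit Arguments. Unset Strict Implicit. Unset Printing Implicit Defensive.

Definition lastb R (i : 'I_R) : bool := i.+1 == R.

Definition V (R Q N : nat) : finType :=
  ((('I_R * 'I_Q) + (bool + ('I_Q * bool))) + 'I_N)%type.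

Definition adjWP R Q (x : 'I_R * 'I_Q) (p : bool + ('I_Q * bool)) : bool :=
  match p with
  | inl s => s == lastb x.1
  | inr (c, s) => (x.2 == c) && (s == lastb x.1)
  end.

Definition adj R Q N (u v : V R Q N) : bool :=
  match u, v with
  | inl (inl x), inl (inl y) => x.1 != y.1
  | inl (inl x), inl (inr p) => adjWP x p
  | inl (inr p), inl (inl x) => adjWP x p
  | _, _ => false
  end.

Definition isP R Q N (v : V R Q N) : bool :=
  match v with inl (inr _) => true | _ => false end.

Definition Pset R Q N : {set V R Q N} := [set v | isP v].

Definition dcol R Q N (v : V R Q N) : nat :=
  match v with
  | inl (inr (inr (c, _))) => c + 2
  | _ => 1
  end.

Definition ccol R Q N (v : V R Q N) : nat :=
  match v with
  | inl (inl x) => x.1 + 1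
  | inl (inr (inl s)) => if s then 1 else R
  | inl (inr (inr (_, s))) => if s then 1 else R
  | _ => 1
  end.

Lemma adj_sg R Q N : simple_graph (@adj R Q N).
Proof.
split.
  move=> [[[i b]|p]|n] [[[j c]|p']|n'] //=; by rewrite eq_sym.
by move=> [[[i b]|p]|n] //=; rewrite eqxx.
Qed.

Lemma adj_chi R Q N : 2 <= R -> chi_le (@adj R Q N) R.
Proof.
move=> hR; exists (@ccol R Q N); split.
  move=> [[[i b]|[s|[c s]]]|n] /=; try case: s; try lia.
  have := ltn_ord i; lia.
have H (x : 'I_R * 'I_Q) p : adjWP x p -> ccol (inl (inl x) : V R Q N) != ccol (inl (inr p) : V R Q N).
  case: x => i b; case: p => [s|[c s]] /=; rewrite /lastb;
  [move=> /eqP -> | move=> /andP [_ /eqP ->]];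
  have := ltn_ord i; case: (boolP (i.+1 == R)) => /eqP h /=; lia.
move=> [[[i b]|p]|n] [[[j c]|p']|n'] //=.
- move=> h; apply/negP => /eqP h2; move/negP: h; apply; apply/eqP; apply: val_inj => /=; lia.
- exact: H.
- by move=> /H; rewrite eq_sym.
Qed.

Lemma dist2 (T : finType) (e : rel T) x y : dist_le e x y 2 ->
  x = y \/ e x y \/ exists z, e x z && e z y.
Proof.
move=> /existsP [j /existsP [s /andP [hp /eqP hl]]].
have hs := size_tuple s; have hj := ltn_ord j.
move: hp hl hs; case: (tval s) => [|z [|w [|u rest]]] /=.
- by left.
- by move=> /andP [h _] <-; right; left.
- by move=> /andP [h1 /andP [h2 _]] <-; right; right; exists z; rewrite h1 h2.
- move=> _ _ hs; lia.
Qed.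

Definition pairS R Q N (p : 'I_Q * bool) : {set V R Q N} :=
  [set (inl (inr (inl p.2)) : V R Q N); (inl (inr (inr p)))].

Lemma DG_eq R Q N (i0 iL : 'I_R) : lastb i0 = false -> lastb iL = true ->
  DG (@adj R Q N) (Pset R Q N) 2 = [set @pairS R Q N p | p : 'I_Q * bool].
Proof.
move=> h0 hL; apply/setP => S; rewrite inE; apply/idP/idP.
- move=> /existsP [x /existsP [y /and5P [hx hy hxy /eqP -> hd]]].
  rewrite !inE in hx hy.
  case: (dist2 hd) => {hd} [exy | [exy | [z /andP [h1 h2]]]].
  + by rewrite exy eqxx in hxy.
  + by move: hx hy exy hxy; case: x => [[?|?]|?]; case: y => [[?|?]|?].
  + move: hx hy h1 h2 hxy; case: x => [[?|px]|?] //; case: y => [[?|py]|?] //.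
    case: z => [[w|?]|?] //= _ _.
    case: px => [s|[c s]]; case: py => [s'|[c' s']] /=.
    * by move=> /eqP -> /eqP ->; rewrite eqxx.
    * move=> /eqP -> /andP [/eqP <- /eqP ->] _.
      by apply/imsetP; exists (w.2, lastb w.1).
    * move=> /andP [/eqP <- /eqP ->] /eqP -> _.
      by apply/imsetP; exists (w.2, lastb w.1) => //; rewrite /pairS setUC.
    * by move=> /andP [/eqP <- /eqP ->] /andP [/eqP <- /eqP ->]; rewrite eqxx.
- move=> /imsetP [[c s] _ ->].
  apply/existsP; exists (inl (inr (inl s))); apply/existsP; exists (inl (inr (inr (c, s)))).
  rewrite !inE /= eqxx /=.
  apply/existsP; exists (@Ordinal 3 2 erefl); apply/existsP.
  exists [tuple (inl (inl (if s then iL else i0, c)) : V R Q N); inl (inr (inr (c, s)))].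
  by case: s => /=; rewrite ?h0 ?hL !eqxx.
Qed.

Lemma pairS_inj R Q N : injective (@pairS R Q N).
Proof.
move=> [c s] [c' s'] /setP H.
have := H (inl (inr (inr (c, s)))); rewrite !inE eqxx /=.
by move/esym/eqP => [-> ->].
Qed.

Definition tok (Q : nat) (x y : nat) (bit : bool) : nat :=
  if Q.+1 < x then Q + 2 * (x - Q - 2) + bit
  else if Q.+1 < y then Q + 2 * (y - Q - 2) + bit
  else if bit then y - 2 else x - 2.

Lemma key (R Q m : nat) (g : 'I_R -> 'I_Q -> nat) (q0 : 'I_Q) :
  (q0 : nat) = 0 -> 0 < R ->
  (forall i b, 2 <= g i b <= m) -> (forall i b, g i b != b + 2) ->
  (forall i j b c, i != j -> g i b != g j c) ->
  2 * m <= 2 * R + Q + 1 -> Q.+1 <= m -> False.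
Proof.
move=> hq0 hR hrg hne hdis hm hQ.
pose x i := g i q0.
pose y i := g i (insubd q0 (x i - 2)).
have hxy i : x i <= Q.+1 -> y i != x i.
  move=> hx; rewrite /y.
  have := hne i (insubd q0 (x i - 2)).
  rewrite val_insubd.
  have := hrg i q0; have := hne i q0; rewrite hq0 /x.
  rewrite /x in hx *; case: ifP => h; lia.
have hrx i : 2 <= x i <= m := hrg i q0.
have hry i : 2 <= y i <= m := hrg i _.
have tlt : forall p : 'I_R * bool, tok Q (x p.1) (y p.1) p.2 < (2 * R - 1).
  move=> [i b] /=; rewrite /tok.
  have := hrx i; have := hry i.
  case: b => /= ? ?; repeat (case: ifP => ?); lia.
pose h (p : 'I_R * bool) : 'I_(2 * R - 1) := Ordinal (tlt p).
have hinj : injective h.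
  move=> [i b] [j b'] /= /(congr1 val) /= heq.
  have hij : i = j.
    apply/eqP; apply: contraT => hij.
    have : x i != x j := hdis _ _ q0 q0 hij.
    have : x i != y j := hdis _ _ q0 _ hij.
    have : y i != x j := hdis _ _ _ q0 hij.
    have : y i != y j := hdis _ _ _ _ hij.
    have := hrx i; have := hry i; have := hrx j; have := hry j.
    move=> *; move: heq; rewrite /tok.
    case: b; case: b' => /=; repeat (case: ifP => ?); lia.
  subst j; congr pair.
  have := hxy i; have := hrx i; have := hry i.
  move=> *; move: heq; rewrite /tok.
  case: b; case: b' => //=; repeat (case: ifP => ?); lia.
have := @leq_card _ _ h hinj.
rewrite card_prod card_bool !card_ord; lia.
Qed.

Theorem theorem6 (r k : nat) :
  2 <= r -> 0 < k -> ~~ odd (r + k) -> k <= r ->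
  forall N : nat,
  exists (T : finType) (e : rel T) (P : {set T}) (d : T -> nat),
    N <= #|T| /\
      [/\ simple_graph e,
        chi_le e r,
        #|DG e P 2| = 2 * (r + k - 1),
        precoloring e P (r + k) d &
        ~ (exists f : T -> nat, m_coloring e ((3 * r + k) %/ 2) f /\ extends P d f)].
Proof.
move=> hr hk hev hkr N.
have h0 : 0 < r by lia.
have hL : r.-1 < r by lia.
have hq : 0 < r + k - 1 by lia.
exists (V r (r + k - 1) N), (@adj _ _ _), (Pset _ _ _), (@dcol _ _ _).
split.
  rewrite /V !card_sum card_ord; lia.
split.
- exact: adj_sg.
- exact: adj_chi.
- rewrite (@DG_eq _ _ _ (Ordinal h0) (Ordinal hL)); last 2 first.
  + rewrite /lastb /=; apply/eqP; lia.
  + rewrite /lastb /=; apply/eqP; lia.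
  rewrite card_imset; last exact: pairS_inj.
  rewrite card_prod card_ord card_bool; lia.
- split.
  + move=> [[?|[s|[c s]]]|?]; rewrite inE //= => _; [lia|]; have := ltn_ord c; lia.
  + by move=> [[?|?]|?] [[?|?]|?]; rewrite !inE.
- move=> [f [[hf1 hf2] hext]].
  have hm := even_halfK hev.
  pose g i b := f (inl (inl (i, b))).
  apply: (@key r (r + k - 1) ((3 * r + k) %/ 2) g (Ordinal hq)) => //.
  + move=> i b; have := hf1 (inl (inl (i, b))).
    have := hf2 (inl (inl (i, b))) (inl (inr (inl (lastb i)))).
    rewrite /= eqxx (hext (inl (inr (inl (lastb i))))) ?inE //= /g => /(_ isT).
    move: (f _) => n; move=> /eqP h1 /andP [h2 h3]; rewrite h3 andbT; lia.
  + move=> i b.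
    have := hf2 (inl (inl (i, b))) (inl (inr (inr (b, lastb i)))).
    by rewrite /= !eqxx (hext (inl (inr (inr (b, lastb i))))) ?inE //= => /(_ isT).
  + move=> i j b c hij; exact: (hf2 (inl (inl (i, b))) (inl (inl (j, c)))).
  + move: hm; rewrite -muln2; lia.
  + move: hm; rewrite -muln2; lia.
Qed.
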